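(* Let $f\in\mathbb{Z}_2[z]$ with $f(0)=1$ and $\deg f=n$. Then $P_f\le 4^n$.
   Context: $\mathbb{Z}_2$ is the two-element field. For $f\in\mathbb{Z}_2[z]$ with $f(0)=1$ and $\deg f=n$, let $V_f$ be the set of polynomials in $\mathbb{Z}_2[z]$ of degree less than $n$ (including $0$), and let $\sigma_0,\sigma_1:V_f\to V_f$ be the maps $\sigma_0(g)=(gz)\bmod f$ and $\sigma_1(g)=(gz+1)\bmod f$, where $h\bmod f$ is the remainder of $h$ upon division by $f$; these are bijections since $f(0)=1$. Let $G_f$ be the permutation group on $V_f$ generated by $\sigma_0,\sigma_1$, and $P_f=|G_f|$. (Equivalently, $\sigma_0,\sigma_1$ are the transition maps of the division-by-$f$ automaton on states $V_f$ with transitions $g\xrightarrow{b}(gz+b)\bmod f$; every word $u\in\{0,1\}^*$ labels, from any state, a path returning to it after reading $u^{P_f}$.) *)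

(* Defs.v *)
From HB Require Import structures.
From mathcomp Require Import all_boot all_order all_fingroup all_algebra.
Set Implicit Arguments. Unset Strict Implicit. Unset Printing Implicit Defensive.
Import GRing.Theory.
Local Open Scope ring_scope.

Notation F2 := 'F_2.

(* V_f : polynomials of degree < n = deg f, i.e. of size <= (size f).-1. *)
Notation Vf f := {poly_((size f).-1) F2}.

Definition sigma_fun (f : {poly F2}) (b : F2) (g : Vf f) : Vf f :=
  insubd (0 : Vf f) (((val g) * 'X + b%:P) %% f).
Arguments sigma_fun : clear implicits.

Lemma sigma_fun_val (f : {poly F2}) (b : F2) (g : Vf f) :
  f != 0 -> val (sigma_fun f b g) = ((val g) * 'X + b%:P) %% f.
Proof.
move=> f0; rewrite /sigma_fun val_insubd.
have -> : ((val g * 'X + b%:P) %% f) \is a poly_of_size (size f).-1 => //.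
rewrite qualifE /= -ltnS prednK ?ltn_modpN0 //.
by rewrite size_poly_gt0.
Qed.

Lemma sigma_fun_inj (f : {poly F2}) (b : F2) :
  f`_0 = 1 -> injective (sigma_fun f b).
Proof.
move=> f01.
have f0 : f != 0.
  by apply/eqP => E0; move: f01; rewrite E0 coef0 => /eqP; rewrite eq_sym oner_eq0.
move=> g h /(congr1 val); rewrite !sigma_fun_val // => E.
apply/val_inj/eqP; rewrite -subr_eq0; apply/eqP.
have Hd : f %| (val g - val h) * 'X.
  apply/modp_eq0P.
  rewrite (_ : (val g - val h) * 'X = (val g * 'X + b%:P) - (val h * 'X + b%:P));
    last by rewrite mulrBl opprD addrACA subrr addr0.
  by rewrite modpD modNp E subrr.
have cop : coprimep f 'X.
  rewrite -[X in coprimep _ X]subr0 -polyC0 coprimep_XsubC /root horner_coef0 f01.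
  by rewrite oner_eq0.
rewrite (Gauss_dvdpl _ cop) in Hd.
apply/eqP; apply: contraTT Hd => nz; apply/negP => /(dvdp_leq nz).
have lt : forall p : {poly F2}, (size p <= (size f).-1 -> size p < size f)%N.
  by move=> p; rewrite -ltnS prednK // size_poly_gt0.
apply/negP; rewrite -ltnNge.
apply: leq_ltn_trans (size_polyD _ _) _; rewrite size_polyN gtn_max.
by rewrite !lt ?size_npoly.
Qed.

Definition sigma (f : {poly F2}) (hf : f`_0 = 1) (b : F2) : {perm Vf f} :=
  perm (@sigma_fun_inj f b hf).

Definition Gf (f : {poly F2}) (hf : f`_0 = 1) : {set {perm Vf f}} :=
  <<[set sigma hf 0; sigma hf 1]>>%g.

Definition Pf (f : {poly F2}) (hf : f`_0 = 1) : nat := #|Gf hf|.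

(* Main.v *)
Require Import Defs.
From mathcomp Require Import all_boot all_order all_fingroup all_algebra.
Local Open Scope ring_scope.
Import GRing.Theory.

Section Aff.
Variables (f : {poly 'F_2}) (hf : f`_0 = 1).

Lemma f_neq0 : f != 0.
Proof.
by apply/eqP => E0; move: hf; rewrite E0 coef0 => /eqP; rewrite eq_sym oner_eq0.
Qed.

Definition mkV (p : {poly 'F_2}) : Vf f := insubd (0 : Vf f) (p %% f).

Lemma mkV_val p : val (mkV p) = p %% f.
Proof.
rewrite /mkV val_insubd.
have -> : (p %% f) \is a poly_of_size (size f).-1 => //.
rewrite qualifE /= -ltnS prednK ?ltn_modpN0 ?f_neq0 //.
by rewrite size_poly_gt0 f_neq0.
Qed.

Lemma Vf_small (g : Vf f) : val g %% f = val g.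
Proof.
apply: modp_small; apply: leq_ltn_trans (size_npoly g) _.
by rewrite ltn_predL size_poly_gt0 f_neq0.
Qed.

Definition aff (h c : Vf f) (p : {perm Vf f}) :=
  [forall g, val (p g) == (val h * val g + val c) %% f].

Definition Aset : {set {perm Vf f}} :=
  [set p | [exists hc : Vf f * Vf f, aff hc.1 hc.2 p]].

Lemma affP h c (p : {perm Vf f}) :
  (forall g, val (p g) = (h * val g + c) %% f) -> p \in Aset.
Proof.
move=> H; rewrite inE; apply/existsP; exists (mkV h, mkV c).
apply/forallP => g /=; rewrite H !mkV_val; apply/eqP.
by rewrite modpD [in RHS]modpD modp_id [h %% f * _]mulrC modp_mul mulrC.
Qed.

Lemma Aset_group : group_set Aset.
Proof.
apply/group_setP; split.
  apply: (@affP 1 0) => g; rewrite perm1 mul1r addr0 Vf_small //.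
move=> p q; rewrite [p \in _]inE [q \in _]inE => /existsP [[h c] /forallP /= Hp]
  /existsP [[h' c'] /forallP /= Hq].
apply: (@affP (val h' * val h) (val h' * val c + val c')) => g.
rewrite permM; apply: etrans (eqP (Hq (p g))) _; rewrite (eqP (Hp g)).
rewrite addrA modpD [in RHS]modpD; congr (_ + _).
by rewrite modp_mul mulrDr mulrA.
Qed.

Lemma sigma_in b : sigma hf b \in Aset.
Proof.
apply: (@affP 'X b%:P) => g.
by rewrite /sigma permE sigma_fun_val ?f_neq0 // mulrC.
Qed.

Lemma Gf_sub : Gf hf \subset Aset.
Proof.
rewrite /Gf -(gen_set_id Aset_group); apply: genS.
by apply/subsetP => x /set2P [] ->; apply: sigma_in.
Qed.

Definition F (hc : Vf f * Vf f) : {perm Vf f} :=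
  odflt 1%g [pick p | aff hc.1 hc.2 p].

Lemma aff_uniq h c p q : aff h c p -> aff h c q -> p = q.
Proof.
move=> /forallP Hp /forallP Hq; apply/permP => g; apply: val_inj.
by rewrite (eqP (Hp g)) (eqP (Hq g)).
Qed.

Lemma Aset_sub : Aset \subset F @: setT.
Proof.
apply/subsetP => p; rewrite inE => /existsP [hc Hp].
apply/imsetP; exists hc; rewrite ?inE //.
rewrite /F; case: pickP => [q Hq|/(_ p)]; last by rewrite Hp.
exact: aff_uniq Hp Hq.
Qed.

End Aff.

Theorem mainTheorem15 (n : nat) (f : {poly 'F_2}) (hf : f`_0 = 1)
  (hdeg : (size f).-1 = n) :
  (Pf hf <= 4 ^ n)%N.
Proof.
rewrite /Pf; apply: leq_trans (subset_leq_card (@Gf_sub f hf)) _.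
apply: leq_trans (subset_leq_card (@Aset_sub f)) _.
apply: leq_trans (leq_imset_card _ _) _.
rewrite cardsT card_prod card_npoly card_Fp // hdeg -expnMn.
by [].
Qed.
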